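(* Let $G$ and $H$ be graphs with vertex set $\omega$. Then: (i) $G^{<\alpha>}\le G$ for every ordinal $\alpha$; (ii) if $\alpha\le\beta$ then $G^{<\alpha>}\le G^{<\beta>}$; (iii) $G\le H$ if and only if $G^{<\alpha>}\le H$ for every $\alpha<\omega_1$.
   Context: Graphs are simple and loopless; $G\le H$ means there is a homomorphism (edge-preserving vertex map) $G\to H$. For a graph $G$ with vertex set $\omega$ and an ordinal $\alpha$, $G^{<\alpha>}$ is the graph whose vertices are all finite strictly decreasing sequences of ordinals $<\alpha$ (including the empty sequence), with $\{\nu,\mu\}$ an edge iff $\nu$ is a proper initial segment of $\mu$ and $\{\ell(\nu),\ell(\mu)\}\in E(G)$, where $\ell(\nu)\in\omega$ denotes the length of $\nu$. *)

(* Defs.v *)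
From Stdlib Require Import List Sorted.
Import ListNotations.

Definition graph_on_omega (G : nat -> nat -> Prop) : Prop :=
  (forall x y, G x y -> G y x) /\ (forall x, ~ G x x).

Definition hom_le {V1 V2 : Type} (E1 : V1 -> V1 -> Prop) (E2 : V2 -> V2 -> Prop) : Prop :=
  exists f : V1 -> V2, forall x y, E1 x y -> E2 (f x) (f y).

Record ordinal := Ordinal {
  ord_car :> Type;
  ord_lt : ord_car -> ord_car -> Prop;
  ord_trans : forall x y z, ord_lt x y -> ord_lt y z -> ord_lt x z;
  ord_total : forall x y, ord_lt x y \/ x = y \/ ord_lt y x;
  ord_wf : well_founded ord_lt
}.

Definition ord_le (a b : ordinal) : Prop :=
  exists f : a -> b,
    (forall x y, ord_lt a x y <-> ord_lt b (f x) (f y)) /\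
    (forall x (y : b), ord_lt b y (f x) -> exists z, f z = y).

(** alpha < omega_1 : alpha is countable. *)
Definition ord_countable (a : ordinal) : Prop :=
  exists f : a -> nat, forall x y, f x = f y -> x = y.

Definition sdec (a : ordinal) (s : list a) : Prop :=
  Sorted (fun x y => ord_lt a y x) s.

Definition ord_seq (a : ordinal) := { s : list a | sdec a s }.

Definition proper_prefix {A : Type} (s t : list A) : Prop :=
  exists u, u <> [] /\ t = s ++ u.

Definition ord_power (G : nat -> nat -> Prop) (a : ordinal)
  (nu mu : ord_seq a) : Prop :=
  (proper_prefix (proj1_sig nu) (proj1_sig mu) \/
   proper_prefix (proj1_sig mu) (proj1_sig nu)) /\
  G (length (proj1_sig nu)) (length (proj1_sig mu)).

(* Main.v *)
Require Import Defs.
From Stdlib Require Import List Sorted Lia Arith Classical ClassicalEpsilon ProofIrrelevance Cantor.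
Import ListNotations.

Fixpoint kb (s t : list nat) : Prop :=
  match s, t with
  | [], _ => False
  | _ :: _, [] => True
  | a :: s', b :: t' => a < b \/ (a = b /\ kb s' t')
  end.

Lemma kb_app p u v : kb (p ++ u) (p ++ v) <-> kb u v.
Proof. induction p as [|a p IH]; simpl; [tauto|]. rewrite IH. split; [intros [H|[_ H]]; [lia|exact H]|auto]. Qed.

Lemma kb_prefix_false p u : ~ kb p (p ++ u).
Proof. rewrite <- (app_nil_r p) at 1. rewrite kb_app. simpl. tauto. Qed.

Lemma kb_ext p u : u <> [] -> kb (p ++ u) p.
Proof. intro Hu. rewrite <- (app_nil_r p) at 2. rewrite kb_app. destruct u; simpl; tauto. Qed.

Lemma kb_trans s t r : kb s t -> kb t r -> kb s r.
Proof.
  revert t r; induction s as [|a s IH]; intros [|b t] [|c r]; simpl; try tauto.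
  intros [H1|[H1 H2]] [H3|[H3 H4]]; subst; try lia; eauto.
Qed.

Lemma kb_total s t : kb s t \/ s = t \/ kb t s.
Proof.
  revert t; induction s as [|a s IH]; intros [|b t]; simpl; auto.
  destruct (Nat.lt_total a b) as [H|[H|H]]; auto. subst.
  destruct (IH t) as [H|[H|H]]; subst; auto.
Qed.

Definition ok (G H : nat -> nat -> Prop) (l : list nat) : Prop :=
  forall i j, i < j -> j < length l -> G i j -> H (nth i l 0) (nth j l 0).

Lemma noninc_stab (h : nat -> nat) : forall v N0, h N0 <= v ->
  (forall n, N0 <= n -> h (S n) <= h n) ->
  exists M, N0 <= M /\ forall n, M <= n -> h n = h M.
Proof.
  induction v as [|v IH]; intros N0 Hv Hm.
  - assert (A : forall n, N0 <= n -> h n <= h N0).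
    { intros n Hn; induction Hn; [lia|]. specialize (Hm m Hn). lia. }
    exists N0; split; [lia|]. intros n Hn. specialize (A n Hn). lia.
  - assert (A : forall n, N0 <= n -> h n <= h N0).
    { intros n Hn; induction Hn; [lia|]. specialize (Hm m Hn). lia. }
    destruct (classic (forall n, N0 <= n -> h n = h N0)) as [C|C].
    + exists N0; split; auto.
    + apply not_all_ex_not in C as [n C].
      apply imply_to_and in C as [Hn C].
      specialize (A n Hn).
      destruct (IH n) as [M [HM1 HM2]]; [lia| intros m Hm'; apply Hm; lia|].
      exists M; split; [lia|exact HM2].
Qed.

Lemma desc_branch G H (hG : graph_on_omega G) (hH : graph_on_omega H)
  (f : nat -> list nat) (okf : forall n, ok G H (f n))
  (desc : forall n, kb (f (S n)) (f n)) : hom_le G H.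
Proof.
  assert (stab : forall k, exists p N, length p = k /\
            forall n, N <= n -> exists u, f n = p ++ u).
  { induction k as [|k IH].
    - exists [], 0. split; auto. intros n _; exists (f n); reflexivity.
    - destruct IH as [p [N [Hl Hp]]].
      assert (C1 : forall n, S N <= n -> exists a u, f n = p ++ a :: u).
      { intros n Hn. destruct n as [|n]; [lia|].
        destruct (Hp (S n)) as [u1 E1]; [lia|]. destruct (Hp n) as [u2 E2]; [lia|].
        pose proof (desc n) as D. rewrite E1, E2, kb_app in D.
        destruct u1 as [|a u1]; [simpl in D; tauto|]. eauto. }
      set (h := fun n => nth k (f n) 0).
      assert (Hh : forall n a u, f n = p ++ a :: u -> h n = a).
      { intros n a u E. unfold h. rewrite E, <- Hl. apply nth_middle. }
      destruct (noninc_stab h (h (S N)) (S N)) as [M [HM1 HM2]]; [lia| |].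
      { intros n Hn. destruct (C1 n) as [a [u E]]; [lia|].
        destruct (C1 (S n)) as [b [v E']]; [lia|].
        pose proof (desc n) as D. rewrite E, E', kb_app in D.
        rewrite (Hh _ _ _ E), (Hh _ _ _ E'). simpl in D. lia. }
      exists (p ++ [h M]), M. split; [rewrite length_app; simpl; lia|].
      intros n Hn. destruct (C1 n) as [a [u E]]; [lia|].
      exists u. rewrite E, <- app_assoc. simpl. rewrite <- (HM2 n Hn).
      rewrite (Hh _ _ _ E). reflexivity. }
  assert (X : forall k, {p | exists N, length p = k /\
            forall n, N <= n -> exists u, f n = p ++ u}).
  { intro k. apply constructive_indefinite_description.
    destruct (stab k) as [p [N HN]]. eauto. }
  set (P := fun k => proj1_sig (X k)).
  exists (fun i => nth i (P (S i)) 0).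
  assert (key : forall x y, x < y -> G x y -> H (nth x (P (S x)) 0) (nth y (P (S y)) 0)).
  { intros x y Hxy Gxy. unfold P.
    destruct (proj2_sig (X (S x))) as [N1 [L1 H1]].
    destruct (proj2_sig (X (S y))) as [N2 [L2 H2]].
    destruct (H1 (N1 + N2)) as [u1 E1]; [lia|].
    destruct (H2 (N1 + N2)) as [u2 E2]; [lia|].
    pose proof (okf (N1 + N2) x y Hxy) as O.
    rewrite E1 in O at 2. rewrite app_nth1 in O by lia.
    rewrite E2 in O. rewrite app_nth1 in O by lia.
    apply O; auto. rewrite <- E2, E2, length_app. lia. }
  intros x y Gxy. destruct hG as [sG iG]. destruct hH as [sH iH].
  destruct (Nat.lt_total x y) as [L|[L|L]].
  - apply key; auto.
  - subst. exfalso; eapply iG; eauto.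
  - apply sH. apply key; auto.
Qed.

Lemma sorted_snoc {A} (R : A -> A -> Prop) l x :
  Sorted R l -> (l = [] \/ exists l0 y, l = l0 ++ [y] /\ R y x) -> Sorted R (l ++ [x]).
Proof.
  intros S [E|[l0 [y [E Ry]]]]; subst.
  - simpl; auto.
  - clear -S Ry. induction l0 as [|a l0 IH]; simpl in *.
    + constructor; auto.
    + inversion S; subst. constructor; auto.
      destruct l0; simpl in *; inversion H2; constructor; auto.
Qed.

Definition Inv G H (a : ordinal) (g : ord_seq a -> nat) (emb : forall t, ok G H t -> a)
  (nu : ord_seq a) (t : list nat) : Prop :=
  length t = S (length (proj1_sig nu)) /\ ok G H t /\
  (forall i, i < length t -> exists q : ord_seq a, length (proj1_sig q) = i /\
      (exists u, proj1_sig nu = proj1_sig q ++ u) /\ nth i t 0 = g q) /\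
  (proj1_sig nu = [] \/ exists nu0 tp (o : ok G H tp),
      proj1_sig nu = nu0 ++ [emb tp o] /\ t = tp ++ [g nu]).

Lemma seq_build G H (a : ordinal) (g : ord_seq a -> nat)
  (hg : forall x y, ord_power G a x y -> H (g x) (g y))
  (emb : forall t, ok G H t -> a)
  (hemb : forall t1 o1 t2 o2, kb t1 t2 -> ord_lt a (emb t1 o1) (emb t2 o2)) :
  exists f : nat -> list nat, (forall n, ok G H (f n)) /\ (forall n, kb (f (S n)) (f n)).
Proof.
  assert (step : forall nu t, Inv G H a g emb nu t -> exists nu' t',
             Inv G H a g emb nu' t' /\ kb t' t).
  { intros nu t [L [O [P Ls]]].
    set (x := emb t O).
    assert (S' : sdec a (proj1_sig nu ++ [x])).
    { apply sorted_snoc; [exact (proj2_sig nu)|].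
      destruct Ls as [E|[nu0 [tp [o [E1 E2]]]]]; [auto|right].
      exists nu0, (emb tp o). split; [exact E1|]. cbv beta. apply hemb. rewrite E2. apply kb_ext. discriminate. }
    set (nu' := exist _ (proj1_sig nu ++ [x]) S' : ord_seq a).
    exists nu', (t ++ [g nu']).
    assert (Lnu' : length (proj1_sig nu') = length t).
    { simpl. rewrite length_app; simpl; lia. }
    split; [|apply kb_ext; discriminate].
    split; [rewrite Lnu', length_app; simpl; lia|].
    split.
    { intros i j Hij Hj Gij. rewrite length_app in Hj; simpl in Hj.
      rewrite app_nth1 by lia.
      destruct (Nat.eq_dec j (length t)) as [Ej|Ej].
      - subst j. rewrite nth_middle.
        destruct (P i) as [q [Lq [[u Eu] Nq]]]; [lia|]. rewrite Nq.
        apply hg. split.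
        + left. exists (u ++ [x]). split; [destruct u; discriminate|].
          simpl. rewrite Eu, app_assoc. reflexivity.
        + rewrite Lq, Lnu'. exact Gij.
      - rewrite app_nth1 by lia. apply O; auto; lia. }
    split.
    { intros i Hi. rewrite length_app in Hi; simpl in Hi.
      destruct (Nat.eq_dec i (length t)) as [Ei|Ei].
      - subst i. exists nu'. split; auto. split; [exists []; rewrite app_nil_r; auto|].
        apply nth_middle.
      - destruct (P i) as [q [Lq [[u Eu] Nq]]]; [lia|].
        exists q. split; auto. split.
        + exists (u ++ [x]). simpl. rewrite Eu, app_assoc. reflexivity.
        + rewrite app_nth1 by lia. exact Nq. }
    right. exists (proj1_sig nu), t, O. split; reflexivity. }
  set (State := {p : ord_seq a * list nat | Inv G H a g emb (fst p) (snd p)}).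
  assert (stepf : forall s : State, {s' : State | kb (snd (proj1_sig s')) (snd (proj1_sig s))}).
  { intros [[nu t] I]. apply constructive_indefinite_description.
    destruct (step nu t I) as [nu' [t' [I' K]]].
    exists (exist _ (nu', t') I'). exact K. }
  set (nu0 := exist _ [] (Sorted_nil _) : ord_seq a).
  assert (I0 : Inv G H a g emb nu0 [g nu0]).
  { split; [reflexivity|]. split; [intros i j Hij Hj; simpl in Hj; lia|].
    split; [|left; reflexivity].
    intros i Hi. simpl in Hi. assert (i = 0) by lia. subst.
    exists nu0. split; auto. split; auto. exists []; reflexivity. }
  set (s0 := exist _ (nu0, [g nu0]) I0 : State).
  set (st := fix st n := match n with 0 => s0 | S n => proj1_sig (stepf (st n)) end).
  exists (fun n => snd (proj1_sig (st n))). split.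
  - intro n. destruct (proj2_sig (st n)) as [_ [O _]]. exact O.
  - intro n. exact (proj2_sig (stepf (st n))).
Qed.

Fixpoint enc (l : list nat) : nat :=
  match l with [] => 0 | a :: l => S (Cantor.to_nat (a, enc l)) end.

Lemma enc_inj l1 l2 : enc l1 = enc l2 -> l1 = l2.
Proof.
  revert l2; induction l1 as [|a l1 IH]; intros [|b l2]; simpl; try discriminate; auto.
  intro E. injection E as E.
  pose proof (Cantor.cancel_of_to (a, enc l1)) as C1.
  pose proof (Cantor.cancel_of_to (b, enc l2)) as C2.
  change (Cantor.to_nat (a, enc l1) = Cantor.to_nat (b, enc l2)) in E.
  rewrite E, C2 in C1. injection C1 as E1 E2. subst. f_equal; auto.
Qed.

Lemma sorted_map (a b : ordinal) (f : a -> b)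
  (hf : forall x y, ord_lt a x y -> ord_lt b (f x) (f y)) l :
  sdec a l -> sdec b (map f l).
Proof.
  unfold sdec. induction l as [|x l IH]; intro S; simpl; [constructor|].
  inversion S; subst. constructor; auto.
  destruct l; simpl; constructor. inversion H2; subst. auto.
Qed.

Theorem lemma8 (G H : nat -> nat -> Prop) (hG : graph_on_omega G) (hH : graph_on_omega H) :
  (forall a : ordinal, hom_le (ord_power G a) G) /\
  (forall a b : ordinal, ord_le a b -> hom_le (ord_power G a) (ord_power G b)) /\
  (hom_le G H <-> (forall a : ordinal, ord_countable a -> hom_le (ord_power G a) H)).
Proof.
  assert (P1 : forall a : ordinal, hom_le (ord_power G a) G).
  { intro a. exists (fun nu => length (proj1_sig nu)). intros x y [_ E]. exact E. }
  split; [exact P1|]. split.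
  { intros a b [f [hf _]].
    assert (hf' : forall x y, ord_lt a x y -> ord_lt b (f x) (f y)) by (intros; apply hf; auto).
    exists (fun nu => exist _ (map f (proj1_sig nu)) (sorted_map a b f hf' _ (proj2_sig nu))).
    intros [x Sx] [y Sy] [Pre E]; simpl in *. split.
    - destruct Pre as [[u [Hu Eu]]|[u [Hu Eu]]]; [left|right]; exists (map f u);
        (split; [destruct u; simpl; congruence|]); subst; apply map_app.
    - simpl. rewrite !length_map. exact E. }
  split.
  { intros [h Hh] a _. destruct (P1 a) as [k Hk]. exists (fun x => h (k x)). auto. }
  intro Hall. apply NNPP. intro nhom.
  set (T := {l : list nat | ok G H l}).
  set (lt := fun x y : T => kb (proj1_sig x) (proj1_sig y)).
  assert (eqT : forall x y : T, proj1_sig x = proj1_sig y -> x = y).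
  { intros [x ox] [y oy]; simpl; intro E; subst. f_equal. apply proof_irrelevance. }
  assert (tr : forall x y z, lt x y -> lt y z -> lt x z) by (unfold lt; intros; eapply kb_trans; eauto).
  assert (to : forall x y, lt x y \/ x = y \/ lt y x).
  { intros x y. unfold lt. destruct (kb_total (proj1_sig x) (proj1_sig y)) as [A|[A|A]]; auto. }
  assert (wf : well_founded lt).
  { intro x. apply NNPP; intro nacc.
    assert (nx : forall x, ~ Acc lt x -> exists y, lt y x /\ ~ Acc lt y).
    { intros z nz. apply NNPP; intro C. apply nz. constructor. intros y Hy.
      apply NNPP; intro. apply C; eauto. }
    assert (stepf : forall s : {z | ~ Acc lt z}, {s' : {z | ~ Acc lt z} | lt (proj1_sig s') (proj1_sig s)}).
    { intros [z nz]. apply constructive_indefinite_description.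
      destruct (nx z nz) as [y [Hy ny]]. exists (exist _ y ny). exact Hy. }
    set (st := fix st n := match n with 0 => exist _ x nacc | S n => proj1_sig (stepf (st n)) end).
    apply nhom. apply (desc_branch G H hG hH (fun n => proj1_sig (proj1_sig (st n)))).
    - intro n. exact (proj2_sig (proj1_sig (st n))).
    - intro n. exact (proj2_sig (stepf (st n))). }
  set (alpha := Ordinal T lt tr to wf).
  destruct (Hall alpha) as [g hg].
  { exists (fun x : T => enc (proj1_sig x)). intros x y E. apply eqT, enc_inj, E. }
  destruct (seq_build G H alpha g hg (fun t o => exist _ t o : T)) as [f [okf desc]].
  { intros. simpl. unfold lt. simpl. auto. }
  apply nhom. exact (desc_branch G H hG hH f okf desc).
Qed.
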